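(* For every integer $k\ge 1$, let $a^{(k)}_n=|S_n(123,\,213,\,1(k+1)k(k-1)\cdots 2)|$ for $n\ge 0$, with $a^{(k)}_0=1$ counting the empty permutation. Then $$\sum_{n\ge 0} a^{(k)}_n x^n=\frac{1-x}{1-2x+x^{k+1}}.$$ (In particular, for $k=3$ this equals $\frac{1}{1-x-x^2-x^3}$, the generating function of the Tribonacci numbers $1,1,2,4,7,13,24,\dots$.) *)

(* Defs.v *)
From HB Require Import structures.
From mathcomp Require Import all_boot all_order all_algebra all_fingroup.
Set Implicit Arguments. Unset Strict Implicit. Unset Printing Implicit Defensive.
Import Order.TTheory GRing.Theory Num.Theory.

(* A permutation p of {0,..,n-1} (one-line notation p 0, ..., p (n-1))
   contains the pattern q (given in one-line notation as a list of
   distinct naturals, e.g. [:: 2; 1; 3] for 213) iff there are positions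
   f 0 < f 1 < ... < f (m-1) such that the subsequence p (f 0) ... p (f (m-1))
   is order-isomorphic to q. *)
Definition contains (n : nat) (p : 'S_n) (q : seq nat) : bool :=
  [exists f : {ffun 'I_(size q) -> 'I_n},
    [forall i : 'I_(size q), forall j : 'I_(size q),
       ((i < j)%N ==> (f i < f j)%N) &&
       ((p (f i) < p (f j))%N == (nth 0 q i < nth 0 q j)%N)]].

Definition avoids (n : nat) (p : 'S_n) (q : seq nat) : bool := ~~ contains p q.

Definition pat123 : seq nat := [:: 1; 2; 3].
Definition pat213 : seq nat := [:: 2; 1; 3].
Definition patk (k : nat) : seq nat := 1 :: rev (iota 2 k).

Definition a (k n : nat) : nat :=
  #|[set p : 'S_n | [&& avoids p pat123, avoids p pat213 & avoids p (patk k)]]|.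

(* Main.v *)
Require Import Defs.
From HB Require Import structures.
From mathcomp Require Import all_boot all_order all_algebra all_fingroup.
From mathcomp Require Import zify.
Set Implicit Arguments. Unset Strict Implicit. Unset Printing Implicit Defensive.

Lemma idx_subseq (w : seq nat) m (F : nat -> nat) :
  (forall i j, i < j -> j < m -> F i < F j) -> (forall i, i < m -> F i < size w) ->
  subseq [seq nth 0 w (F i) | i <- iota 0 m] w.
Proof.
elim: w m F => [|y w IH] m F Hinc Hlt.
  by case: m Hinc Hlt => [|m] // _ /(_ 0 isT).
case: m Hinc Hlt => [|m] Hinc Hlt; first by rewrite sub0seq.
have Hpos : forall i, 0 < i -> i < m.+1 -> 0 < F i.
  by move=> i Hi Him; have := Hinc 0 i Hi Him; lia.
have E : [seq nth 0 (y :: w) (F i) | i <- iota 0 m.+1]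
    = nth 0 (y :: w) (F 0) :: [seq nth 0 (y :: w) (F i.+1) | i <- iota 0 m].
  by rewrite /= -(addn0 1) iotaDl -map_comp.
rewrite E.
case: (posnP (F 0)) => HF0.
- rewrite HF0 /= eqxx.
  have -> : [seq nth 0 (y :: w) (F i.+1) | i <- iota 0 m]
         = [seq nth 0 w ((fun i => (F i.+1).-1) i) | i <- iota 0 m].
    apply/eq_in_map => i; rewrite mem_iota => /andP[_ Hi] /=.
    by rewrite -{1}(prednK (Hpos i.+1 isT Hi)).
  apply: IH => [i j Hij Hj|i Hi].
    have := Hinc i.+1 j.+1 Hij Hj; have := Hpos i.+1 isT (ltn_trans Hij Hj); lia.
  have := Hlt i.+1 Hi; have := Hpos i.+1 isT Hi; rewrite /=; lia.
- apply: (subseq_trans _ (subseq_cons w y)).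
  have -> : nth 0 (y :: w) (F 0) :: [seq nth 0 (y :: w) (F i.+1) | i <- iota 0 m]
         = [seq nth 0 w ((fun i => (F i).-1) i) | i <- iota 0 m.+1].
    rewrite /= -(addn0 1) iotaDl -map_comp /=.
    rewrite -{1}(prednK HF0) /=; congr (_ :: _).
    apply/eq_in_map => i; rewrite mem_iota => /andP[_ Hi] /=.
    by rewrite -{1}(prednK (Hpos i.+1 isT Hi)).
  apply: IH => [i j Hij Hj|i Hi].
    have := Hinc i j Hij Hj; have := Hinc 0 j; case: (posnP i) => [->|Hi0];
      first (move=> _; lia).
    have := Hpos i Hi0 (ltn_trans Hij Hj); lia.
  have := Hlt i Hi; case: (posnP i) => [->|Hi0]; first (rewrite /=; lia).
  have := Hpos i Hi0 Hi; rewrite /=; lia.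
Qed.

Lemma subseq_idx (w t : seq nat) : subseq t w ->
  exists F : nat -> nat, (forall i j, i < j -> j < size t -> F i < F j) /\
    (forall i, i < size t -> F i < size w /\ nth 0 w (F i) = nth 0 t i).
Proof.
elim: w t => [|y w IH] t.
  by rewrite subseq0 => /eqP ->; exists id.
case: t => [|x t]; first by exists id.
rewrite /=; case: eqP => [->|Hne] Hs.
- have [F [H1 H2]] := IH t Hs.
  exists (fun i => if i is i'.+1 then (F i').+1 else 0); split.
    by case=> [|i] [|j] //= Hij Hj; rewrite ltnS; apply: H1.
  case=> [|i] //= Hi; have [A B] := H2 i Hi; by rewrite ltnS.
- have [F [H1 H2]] := IH _ Hs.
  exists (fun i => (F i).+1); split.
    by move=> i j Hij Hj; rewrite ltnS; apply: H1.
  move=> i Hi; have [A B] := H2 i Hi; by rewrite /= ltnS.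
Qed.

Lemma subseq_catP (s d v : seq nat) : subseq s (d ++ v) ->
  exists s1 s2, s = s1 ++ s2 /\ subseq s1 d /\ subseq s2 v.
Proof.
elim: d s => [|y d IH] s /=.
  by move=> H; exists [::], s.
case: s => [|x s]; first by move=> _; exists [::], [::]; rewrite !sub0seq.
rewrite /=; case: eqP => [->|Hne] Hs.
- have [s1 [s2 [E [A B]]]] := IH _ Hs.
  by exists (y :: s1), s2; rewrite E /= eqxx.
- have [s1 [s2 [E [A B]]]] := IH _ Hs.
  exists s1, s2; split => //; split => //.
  exact: subseq_trans A (subseq_cons d y).
Qed.

Definition iso (t q : seq nat) := size t = size q /\ forall i j, i < size q -> j < size q ->
  (nth 0 t i < nth 0 t j) = (nth 0 q i < nth 0 q j).
Definition hasPat (w q : seq nat) := exists t, subseq t w /\ iso t q.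
Definition bad3 (w : seq nat) := exists a b c, subseq [:: a; b; c] w /\ a < c /\ b < c.
Definition badk k (w : seq nat) := exists x t, subseq (x :: t) w /\ size t = k /\ all (fun y => x < y) t.

Lemma pat123_bad3 w : hasPat w pat123 -> bad3 w.
Proof.
case=> t [Hs [Hsz Hi]].
case: t Hs Hsz Hi => [|a [|b [|c [|? ?]]]] //= Hs _ Hi.
exists a, b, c; split => //.
by have := Hi 0 2 isT isT; have := Hi 1 2 isT isT => /= -> ->.
Qed.

Lemma pat213_bad3 w : hasPat w pat213 -> bad3 w.
Proof.
case=> t [Hs [Hsz Hi]].
case: t Hs Hsz Hi => [|a [|b [|c [|? ?]]]] //= Hs _ Hi.
exists a, b, c; split => //.
by have := Hi 0 2 isT isT; have := Hi 1 2 isT isT => /= -> ->.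
Qed.

Lemma bad3_pat w : uniq w -> bad3 w -> hasPat w pat123 \/ hasPat w pat213.
Proof.
move=> Hu [a [b [c [Hs [Hac Hbc]]]]].
have := subseq_uniq Hs Hu; rewrite /= !inE => /and3P [Ha Hb _].
have Hab : a != b by move: Ha; case: eqP.
case: (ltngtP a b) => Hlt; last by rewrite Hlt eqxx in Hab.
- left; exists [:: a; b; c]; split => //; split => // i j Hi Hj.
  by case: i Hi => [|[|[|i]]] // _; case: j Hj => [|[|[|j]]] // _ /=; lia.
- right; exists [:: a; b; c]; split => //; split => // i j Hi Hj.
  by case: i Hi => [|[|[|i]]] // _; case: j Hj => [|[|[|j]]] // _ /=; lia.
Qed.

Lemma nth_patk k i : 0 < i <= k -> nth 0 (patk k) i = 2 + (k - i).
Proof.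
case: i => [|i] //= Hi.
rewrite nth_rev size_iota //= nth_iota; lia.
Qed.

Lemma patk_badk k w : hasPat w (patk k) -> badk k w.
Proof.
case=> t [Hs [Hsz Hi]].
case: t Hs Hsz Hi => [|x t] //= Hs; rewrite size_rev size_iota => [[Hsz]] Hi.
exists x, t; split => //; split => //.
apply/(all_nthP 0) => i Hit.
have := Hi 0 i.+1 isT. rewrite /= ?size_rev ?size_iota ltnS -Hsz => /(_ Hit) /=.
rewrite nth_rev size_iota // nth_iota; last lia.
move=> ->; lia.
Qed.

Lemma pairwise_sub (R : rel nat) (s : seq nat) :
  (forall b c, subseq [:: b; c] s -> R b c) -> pairwise R s.
Proof.
elim: s => [|y s IH] //= H; apply/andP; split.
  apply/allP => z Hz; apply: H; by rewrite /= eqxx sub1seq.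
apply: IH => b c Hbc; apply: H; exact: subseq_trans Hbc (subseq_cons _ _).
Qed.

Lemma badk_patk k w : uniq w -> ~ bad3 w -> badk k w -> hasPat w (patk k).
Proof.
move=> Hu Hb [x [t [Hs [Hsz Hall]]]].
have Hut : uniq (x :: t) := subseq_uniq Hs Hu.
have Hut' : uniq t by case/andP: Hut.
have Hpw : pairwise (fun a b => b < a) t.
  apply: pairwise_sub => b c Hbc.
  have Hb3 : subseq [:: x; b; c] w.
    by apply: subseq_trans Hs; rewrite /= eqxx.
  have Hc : x < c by move/allP: Hall; apply; apply: (mem_subseq Hbc); rewrite !inE eqxx orbT.
  have : b != c.
    by have := subseq_uniq Hbc Hut'; rewrite /= inE andbT.
  have : ~~ (b < c) by apply/negP => Hbc'; apply: Hb; exists x, b, c.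
  move=> /= H1 H2; lia.
exists (x :: t); split => //; split; first by rewrite /= size_rev size_iota Hsz.
move=> i j; rewrite /= size_rev size_iota !ltnS => Hi Hj.
case: i Hi => [|i] Hi; case: j Hj => [|j] Hj /=; rewrite ?ltnn //.
- have := (all_nthP 0 Hall) j; rewrite Hsz => /(_ Hj) ->.
  rewrite nth_rev size_iota // nth_iota; lia.
- have := (all_nthP 0 Hall) i; rewrite Hsz => /(_ Hi) H.
  rewrite nth_rev size_iota // nth_iota; lia.
- rewrite !nth_rev ?size_iota // !nth_iota; try lia.
  have HP := pairwiseP 0 Hpw; rewrite Hsz in HP.
  case: (ltngtP i j) => Hij.
  + have := HP i j Hi Hj Hij => /= H; lia.
  + have := HP j i Hj Hi Hij => /= H; lia.
  + subst; lia.
Qed.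

Definition blk n t := t :: rev (iota t.+1 (n - t.+1)).

Fixpoint Gf k f n : seq (seq nat) :=
  match f with
  | 0 => [:: [::]]
  | f'.+1 => match n with 0 => [:: [::]]
             | _ => [seq blk n t ++ v | t <- index_iota (n - k) n, v <- Gf k f' t] end
  end.

Lemma Gf_stable k n f1 f2 : n <= f1 -> n <= f2 -> Gf k f1 n = Gf k f2 n.
Proof.
elim: f1 n f2 => [|f1 IH] n f2.
  by rewrite leqn0 => /eqP -> _; case: f2.
case: n => [|n] Hn1; first by case: f2.
case: f2 => [|f2] // Hn2 /=.
rewrite /allpairs_dep; congr flatten; apply/eq_in_map => t.
rewrite mem_index_iota => /andP[_ Ht].
by rewrite (IH t f2) //; lia.
Qed.

Lemma memG k f n w : n <= f -> 0 < n -> w \in Gf k f n ->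
  exists t v, [/\ n - k <= t < n, v \in Gf k f.-1 t & w = blk n t ++ v].
Proof.
case: f => [|f]; first lia.
case: n => [|n] // _ _ /= /allpairsPdep [t [v [Ht Hv ->]]].
by exists t, v; split => //; rewrite -mem_index_iota.
Qed.

Lemma G_perm k f n w : n <= f -> w \in Gf k f n -> perm_eq w (iota 0 n).
Proof.
elim: f n w => [|f IH] n w.
  by rewrite leqn0 => /eqP -> /=; rewrite inE => /eqP ->.
case: n => [|n] Hn; first by rewrite /= inE => /eqP ->.
move=> /(memG Hn (ltn0Sn n)) [t [v [/andP[Ht1 Ht2] Hv ->]]].
have Hpv := IH t v (ltac:(lia)) Hv.
have -> : iota 0 n.+1 = iota 0 t ++ iota t (n.+1 - t).
  by rewrite -iotaD; congr iota; lia.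
rewrite perm_catC; apply: perm_cat => //.
rewrite /blk; have -> : n.+1 - t = (n.+1 - t.+1).+1 by lia.
by rewrite /= perm_cons perm_rev.
Qed.

Lemma G_uniq k f n : uniq (Gf k f n).
Proof.
elim: f n => [|f IH] n //; case: n => [|n] //=.
apply: allpairs_uniq_dep => [|t _|]; first exact: iota_uniq.
  exact: IH.
move=> [t1 v1] [t2 v2] _ _ /= E.
have Et : t1 = t2 by case: E.
subst t2; move: E => /eqP; rewrite eqseq_cons eqxx /= eqseq_cat // eqxx /= => /eqP -> //.
Qed.

Lemma bad3_nil : ~ bad3 [::].
Proof. by case=> a [b [c [H _]]]. Qed.
Lemma badk_nil k : ~ badk k [::].
Proof. by case=> x [t [H _]]. Qed.

Lemma bad3_subseq v w : subseq v w -> bad3 v -> bad3 w.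
Proof. move=> Hs [a [b [c [H1 H2]]]]; exists a, b, c; split => //; exact: subseq_trans H1 Hs. Qed.
Lemma badk_subseq k v w : subseq v w -> badk k v -> badk k w.
Proof. move=> Hs [a [b [H1 H2]]]; exists a, b; split => //; exact: subseq_trans H1 Hs. Qed.

Lemma gtn_trans : transitive (fun a b : nat => b < a).
Proof. move=> a b c /= H1 H2; lia. Qed.

Lemma cons_good k t d v : 0 < k -> size d < k ->
  (forall y, y \in d -> t < y) -> (forall y, y \in v -> y < t) ->
  sorted (fun a b => b < a) d -> ~ bad3 v -> ~ badk k v ->
  ~ bad3 (t :: d ++ v) /\ ~ badk k (t :: d ++ v).
Proof.
move=> Hk Hsz Hd Hv Hsd Hb3 Hbk.
have sd2 : forall b c, subseq [:: b; c] d -> c < b.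
  move=> b c H; have := subseq_sorted gtn_trans H Hsd; by rewrite /= andbT.
have Hv' : forall y s, subseq s v -> y \in s -> y < t.
  by move=> y s Hs Hy; apply: Hv; apply: (mem_subseq Hs).
have Hd' : forall y s, subseq s d -> y \in s -> t < y.
  by move=> y s Hs Hy; apply: Hd; apply: (mem_subseq Hs).
split.
- case=> a [b [c [Hs [Hac Hbc]]]].
  move: Hs; rewrite /=; case: eqP => [Eat|_] /subseq_catP [s1 [s2 [E [H1 H2]]]].
  + subst a; case: s1 E H1 => [|x1 [|x2 [|x3 s1]]] /= E H1.
    * subst s2; have := Hv' c _ H2; rewrite !inE eqxx orbT => /(_ isT); lia.
    * case: E => ? ?; subst; have := Hv' c _ H2; rewrite !inE eqxx => /(_ isT); lia.
    * case: E => ? ? ?; subst; have := sd2 _ _ H1; lia.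
    * by case: E.
  + case: s1 E H1 => [|x1 [|x2 [|x3 [|x4 s1]]]] /= E H1.
    * subst s2; apply: Hb3; exists a, b, c; split => //.
    * case: E => ? ?; subst; have := Hv' c _ H2; rewrite !inE eqxx orbT => /(_ isT).
      have := Hd' x1 _ H1; rewrite !inE eqxx => /(_ isT); lia.
    * case: E => ? ? ?; subst; have := Hv' c _ H2; rewrite !inE eqxx => /(_ isT).
      have := Hd' x2 _ H1; rewrite !inE eqxx orbT => /(_ isT); lia.
    * case: E => ? ? ? ?; subst.
      have := sd2 x2 x3 (subseq_trans (subseq_cons [:: x2; x3] x1) H1); lia.
    * by case: E.
- case=> y [u [Hs [Hszu Hall]]].
  have Hu : forall z, z \in u -> y < z by move=> z; move/allP: Hall; apply.
  move: Hs; rewrite /=; case: eqP => [Eyt|Hne] /subseq_catP [s1 [s2 [E [H1 H2]]]].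
  + subst y; case: s2 E H2 => [|z s2] E H2.
      have := size_subseq H1; rewrite cats0 in E; rewrite -E; lia.
    have := Hv' z _ H2; rewrite inE eqxx => /(_ isT).
    have := Hu z; rewrite E mem_cat inE eqxx orbT => /(_ isT); lia.
  + case: s1 E H1 => [|x1 s1] /= E H1.
      by subst s2; apply: Hbk; exists y, u.
    case: E => ? Eu; subst x1.
    case: s2 Eu H2 => [|z s2] Eu H2.
      rewrite cats0 in Eu; subst s1.
      clear Hall; case: u Hszu Hu H1 => [|z u] /= Hszu Hu H1; first lia.
      have Hyz : subseq [:: y; z] [:: y, z & u] by rewrite /= !eqxx sub0seq.
      have := sd2 y z (subseq_trans Hyz H1).
      have := Hu z; rewrite inE eqxx => /(_ isT); lia.
    have := Hv' z _ H2; rewrite inE eqxx => /(_ isT).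
    have := Hu z; rewrite Eu mem_cat inE eqxx orbT => /(_ isT).
    have := Hd' y _ H1; rewrite inE eqxx => /(_ isT); lia.
Qed.

Lemma G_good k f n w : 0 < k -> n <= f -> w \in Gf k f n -> ~ bad3 w /\ ~ badk k w.
Proof.
move=> Hk; elim: f n w => [|f IH] n w.
  by rewrite leqn0 => /eqP -> /=; rewrite inE => /eqP ->; split; [apply: bad3_nil|apply: badk_nil].
case: n => [|n] Hn.
  by rewrite /= inE => /eqP ->; split; [apply: bad3_nil|apply: badk_nil].
move=> /(memG Hn (ltn0Sn n)) [t [v [/andP[Ht1 Ht2] Hv ->]]].
have [Hb3 Hbk] := IH t v (ltac:(lia)) Hv.
have Hpv := G_perm (ltac:(lia) : t <= f) Hv.
apply: cons_good => //.
- rewrite size_rev size_iota; lia.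
- by move=> y; rewrite mem_rev mem_iota; lia.
- by move=> y; rewrite (perm_mem Hpv) mem_iota; lia.
- rewrite rev_sorted; exact: iota_ltn_sorted.
Qed.

Lemma partition_sub (P : pred nat) r :
  (forall b c, subseq [:: b; c] r -> ~~ P b -> ~~ P c) ->
  r = filter P r ++ filter (predC P) r.
Proof.
elim: r => [|y r IH] //= H.
have H' : forall b c, subseq [:: b; c] r -> ~~ P b -> ~~ P c.
  by move=> b c Hbc; apply: H; exact: subseq_trans Hbc (subseq_cons _ _).
case: (boolP (P y)) => Hy /=; first by rewrite -IH.
have Hall : all (predC P) r.
  by apply/allP => z Hz /=; apply: (H y z) => //; rewrite /= eqxx sub1seq.
move/all_filterP: (Hall) => ->.
have -> : filter P r = [::].
  by apply/eqP; rewrite -[_ == _]negbK -has_filter -all_predC.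
done.
Qed.

Lemma good_G k f n w : n <= f -> perm_eq w (iota 0 n) -> ~ bad3 w -> ~ badk k w ->
  w \in Gf k f n.
Proof.
elim: f n w => [|f IH] n w.
  rewrite leqn0 => /eqP -> /perm_size; rewrite size_iota => /size0nil -> //.
case: n => [|n] Hn.
  by move=> /perm_size; rewrite size_iota => /size0nil ->.
move=> Hp Hb3 Hbk.
have Hw : forall y, (y \in w) = (y < n.+1) by move=> y; rewrite (perm_mem Hp) mem_iota.
have Huw : uniq w by rewrite (perm_uniq Hp) iota_uniq.
case: w Hp Hb3 Hbk Hw Huw => [|x r]; first by move/perm_size.
move=> Hp Hb3 Hbk Hw /andP[Hxr Hur].
have Hxn : x < n.+1 by rewrite -Hw inE eqxx.
have Hr : forall y, (y \in r) = (y < n.+1) && (y != x).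
  move=> y; rewrite -Hw inE; case: eqP => [->|_] /=; first by rewrite (negbTE Hxr).
  by rewrite andbT.
set u := filter (fun y => x < y) r.
set v := filter (predC (fun y => x < y)) r.
have Er : r = u ++ v.
  apply: partition_sub => b c Hbc /= Hb; apply/negP => Hc; apply: Hb3.
  exists x, b, c; split; first by rewrite /= eqxx.
  have : b \in r by apply: (mem_subseq Hbc); rewrite inE eqxx.
  rewrite Hr; lia.
have Hsu : subseq u r := filter_subseq _ _.
have Hsv : subseq v r := filter_subseq _ _.
have Eu : u = rev (iota x.+1 (n.+1 - x.+1)).
  apply: (irr_sorted_eq gtn_trans) => //.
  - by move=> y /=; rewrite ltnn.
  - rewrite sorted_pairwise; last exact: gtn_trans.
    apply: pairwise_sub => b c Hbc.
    have Hub : uniq [:: b; c] by apply: (subseq_uniq Hbc); apply: filter_uniq.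
    have Hbu : b \in u by apply: (mem_subseq Hbc); rewrite inE eqxx.
    have Hcu : c \in u by apply: (mem_subseq Hbc); rewrite !inE eqxx orbT.
    rewrite !mem_filter in Hbu Hcu.
    have : ~~ (b < c).
      apply/negP => Hbc'; apply: Hb3; exists x, b, c; split; last by case/andP: Hcu.
      by rewrite /= eqxx; apply: subseq_trans Hbc Hsu.
    move: Hub; rewrite /= inE andbT; lia.
  - rewrite rev_sorted; exact: iota_ltn_sorted.
  - move=> y; rewrite mem_filter mem_rev mem_iota Hr; lia.
have Hsz : n.+1 - x.+1 < k.
  rewrite ltnNge; apply/negP => Hk; apply: Hbk.
  exists x, (take k u); split; last split.
  - by rewrite /= eqxx; apply: subseq_trans (take_subseq _ _) Hsu.
  - by rewrite size_takel // Eu size_rev size_iota.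
  - by apply/allP => y /mem_take; rewrite mem_filter => /andP[].
have Hpv : perm_eq v (iota 0 x).
  apply: uniq_perm; first exact: filter_uniq.
    exact: iota_uniq.
  move=> y; rewrite mem_filter Hr mem_iota /=; lia.
rewrite /=; apply/allpairsPdep; exists x, v; split.
- rewrite mem_index_iota; lia.
- apply: IH => //; first lia.
  + move=> H; apply: Hb3; apply: bad3_subseq H.
    exact: subseq_trans Hsv (subseq_cons _ _).
  + move=> H; apply: Hbk; apply: badk_subseq H.
    exact: subseq_trans Hsv (subseq_cons _ _).
- by rewrite /blk Er Eu.
Qed.
Definition W n (p : 'S_n) : seq nat := [seq val (p i) | i <- enum 'I_n].

Lemma size_W n (p : 'S_n) : size (W p) = n.
Proof. by rewrite size_map size_enum_ord. Qed.

Lemma nthW n (p : 'S_n) (o : 'I_n) : nth 0 (W p) o = p o.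
Proof.
rewrite /W (nth_map o) ?size_enum_ord //; congr (val (p _)).
by apply: val_inj; rewrite /= nth_enum_ord.
Qed.

Lemma W_perm n (p : 'S_n) : perm_eq (W p) (iota 0 n).
Proof.
apply: uniq_perm; last 2 first.
- exact: iota_uniq.
- move=> y; rewrite mem_iota /= add0n; apply/mapP/idP; first by case=> i _ ->; apply: ltn_ord.
  move=> Hy.
  exists ((p^-1)%g (Ordinal Hy)); first by rewrite mem_enum.
  by rewrite permKV.
rewrite map_inj_uniq ?enum_uniq // => i j /= /val_inj; exact: perm_inj.
Qed.

Lemma W_inj n : injective (@W n).
Proof.
move=> p q E; apply/permP => o; apply: val_inj.
by rewrite /= -!nthW E.
Qed.

Lemma W_surj n (w : seq nat) : perm_eq w (iota 0 n) -> exists p : 'S_n, W p = w.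
Proof.
move=> Hp.
have Hsz : size w = n by rewrite (perm_size Hp) size_iota.
have Hu : uniq w by rewrite (perm_uniq Hp) iota_uniq.
have Hlt : forall i : 'I_n, nth 0 w i < n.
  move=> i; have : nth 0 w i \in w by rewrite mem_nth // Hsz.
  by rewrite (perm_mem Hp) mem_iota.
pose f (i : 'I_n) : 'I_n := Ordinal (Hlt i).
have finj : injective f.
  move=> i j /(congr1 val) /= E; apply: val_inj => /=.
  by move/eqP: E; rewrite nth_uniq ?Hsz // => /eqP.
exists (perm finj); apply: (@eq_from_nth _ 0); first by rewrite size_W Hsz.
move=> i; rewrite size_W => Hi.
by rewrite (nthW _ (Ordinal Hi)) permE.
Qed.

Lemma contains_hasPat n (p : 'S_n) q : 0 < size q -> contains p q <-> hasPat (W p) q.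
Proof.
move=> Hq; split.
- case/existsP => f /forallP H.
  have H' : forall i j : 'I_(size q), ((i < j) ==> (f i < f j)) /\
      ((p (f i) < p (f j)) = (nth 0 q i < nth 0 q j)).
    by move=> i j; have /andP[H1 /eqP H2] := (forallP (H i)) j.
  pose F i := if (insub i : option 'I_(size q)) is Some o then val (f o) else 0.
  have FE : forall o : 'I_(size q), F o = f o by move=> o; rewrite /F valK.
  exists [seq nth 0 (W p) (F i) | i <- iota 0 (size q)]; split.
    apply: idx_subseq => [i j Hij Hj|i Hi].
      have Hi : i < size q by lia.
      rewrite -[i]/(val (Ordinal Hi)) -[j]/(val (Ordinal Hj)) !FE.
      by have [/implyP H1 _] := H' (Ordinal Hi) (Ordinal Hj); apply: H1.
    by rewrite -[i]/(val (Ordinal Hi)) FE size_W.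
  split; first by rewrite size_map size_iota.
  move=> i j Hi Hj.
  rewrite !(nth_map 0) ?size_iota // !nth_iota // !add0n.
  rewrite -[i]/(val (Ordinal Hi)) -[j]/(val (Ordinal Hj)) !FE !nthW.
  by have [_ ->] := H' (Ordinal Hi) (Ordinal Hj).
- case=> t [Hs [Hsz Hiso]].
  have [F [Hinc HF]] := subseq_idx Hs.
  rewrite Hsz in Hinc HF.
  have H0 : F 0 < n by have [+ _] := HF 0 Hq; rewrite size_W.
  pose o0 : 'I_n := Ordinal H0.
  pose f := [ffun o : 'I_(size q) => insubd o0 (F o)].
  have fE : forall o, val (f o) = F o.
    move=> o; rewrite ffunE val_insubd.
    by have [+ _] := HF o (ltn_ord o); rewrite size_W => ->.
  apply/existsP; exists f; apply/forallP => i; apply/forallP => j; apply/andP; split.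
    by apply/implyP => Hij; rewrite !fE; apply: Hinc.
  rewrite -!nthW !fE.
  have [_ ->] := HF i (ltn_ord i); have [_ ->] := HF j (ltn_ord j).
  by rewrite Hiso.
Qed.

Lemma valid_iff k n (p : 'S_n) : 0 < k ->
  [&& avoids p pat123, avoids p pat213 & avoids p (patk k)] = (W p \in Gf k n n).
Proof.
move=> Hk.
have Hu : uniq (W p) by rewrite (perm_uniq (W_perm p)) iota_uniq.
have Hpk : 0 < size (patk k) by [].
apply/idP/idP.
- case/and3P => H1 H2 H3; apply: good_G => //; first exact: W_perm.
  + move=> Hb; have [] := bad3_pat Hu Hb => /contains_hasPat H.
    * by move: H1; rewrite /avoids H.
    * by move: H2; rewrite /avoids H.
  + move=> Hb; have Hb3 : ~ bad3 (W p).
      move=> Hb'; have [] := bad3_pat Hu Hb' => /contains_hasPat H.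
      * by move: H1; rewrite /avoids H.
      * by move: H2; rewrite /avoids H.
    by move: H3; rewrite /avoids (proj2 (contains_hasPat p Hpk) (badk_patk Hu Hb3 Hb)).
- move=> HG; have [Hb3 Hbk] := G_good Hk (leqnn n) HG.
  rewrite /avoids; apply/and3P; split; apply/negP.
  + by move/(contains_hasPat p (isT : 0 < size pat123))/pat123_bad3.
  + by move/(contains_hasPat p (isT : 0 < size pat213))/pat213_bad3.
  + by move/(contains_hasPat _ Hpk)/patk_badk.
Qed.

Lemma a_size k n : 0 < k -> a k n = size (Gf k n n).
Proof.
move=> Hk; rewrite /a.
set A := [set p : 'S_n | W p \in Gf k n n].
have -> : #|[set p : 'S_n | [&& avoids p pat123, avoids p pat213 & avoids p (patk k)]]| = #|A|.
  by apply: eq_card => p; rewrite !inE valid_iff.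
rewrite cardE -(size_map (@W n)); apply: perm_size.
apply: uniq_perm; first by rewrite map_inj_uniq ?enum_uniq //; exact: W_inj.
  exact: G_uniq.
move=> w; apply/mapP/idP => [[p] |Hw].
  by rewrite mem_enum inE => H ->.
have [p Hp] := W_surj (G_perm (leqnn n) Hw).
by exists p => //; rewrite mem_enum inE Hp.
Qed.
Definition c k n := size (Gf k n n).

Lemma c0 k : c k 0 = 1. Proof. by []. Qed.

Lemma cS k n : c k n.+1 = \sum_(n.+1 - k <= t < n.+1) c k t.
Proof.
rewrite /c /= size_allpairs_dep sumnE big_map; apply: eq_big_nat => t Ht.
by rewrite (@Gf_stable k t n t) //; lia.
Qed.

Lemma c1 k : 0 < k -> c k 1 = 1.
Proof. by move=> Hk; rewrite cS (_ : 1 - k = 0) ?big_nat1 //; lia. Qed.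

Lemma cSS k m : 0 < k -> c k m.+2 + (k <= m.+1) * c k (m.+1 - k) = 2 * c k m.+1.
Proof.
move=> Hk; rewrite cS big_nat_recr /=; last lia.
have E := cS k m.
case: (leqP k m.+1) => Hkm.
- rewrite (big_ltn (_ : m.+1 - k < m.+1)) in E; last lia.
  rewrite (_ : (m.+1 - k).+1 = m.+2 - k) in E; last lia.
  rewrite mul1n; lia.
- rewrite (_ : m.+2 - k = m.+1 - k); last lia.
  rewrite mul0n; lia.
Qed.

Import GRing.Theory.
Local Open Scope ring_scope.

Unset Implicit Arguments.

Theorem mainTheorem1 (k : nat) (hk : (1 <= k)%N) (N : nat) :
  take_poly N ((1 - 2%:R *: 'X + 'X^(k.+1)) * \poly_(i < N) ((a k i)%:R : int))
  = take_poly N (1 - 'X).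
Proof.
apply/polyP => j; rewrite !coef_take_poly; case: ifP => // Hj.
rewrite mulrDl mulrBl mul1r -scalerAl coefD coefB coefZ coefXM coefXnM !coef_poly.
rewrite coefB coef1 coefX Hj.
have Ha : forall i, a k i = c k i by move=> i; rewrite a_size.
case: j Hj => [|[|m]] Hj /=.
- by rewrite Ha c0.
- rewrite (ltnW Hj) ltnS hk !Ha c0 c1 // !natz; lia.
- have H := cSS m hk.
  have Hm1 : (m.+1 < N)%N by lia.
  rewrite Hm1 [(m.+2 < k.+1)%N]ltnS ltnNge.
  case: (leqP k m.+1) => Hkm /=.
  + have -> : (m.+2 - k.+1 = m.+1 - k)%N by lia.
    have -> : (m.+1 - k < N)%N by lia.
    rewrite Hkm mul1n in H; rewrite !Ha !natz; lia.
  + rewrite leqNgt Hkm mul0n addn0 in H; rewrite !Ha !natz; lia.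
Qed.
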